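(* In the setting below, suppose that $$\sum_{t\in\mathcal K}\hat d_t^\top Z^\top f(x_t)\le \sum_{t\in\mathcal K^c}\|Z^\top f(x_t)\|_2\quad\text{for all } Z\in\mathbb{R}^{m\times n}.$$ Then $\bar A$ is the unique global minimizer of $\min_{A\in\mathbb{R}^{n\times m}}\sum_{t=0}^{T-1}\|(\bar A-A)f(x_t)+\bar d_t\|_2$ if and only if for every nonzero $Z\in\mathbb{R}^{m\times n}$, $$\sum_{t\in\mathcal K}\hat d_t^\top Z^\top f(x_t)=\sum_{t\in\mathcal K^c}\|Z^\top f(x_t)\|_2\ \Longrightarrow\ \sum_{t\in\mathcal K}\big|\hat d_t^\top Z^\top f(x_t)\big|<\sum_{t\in\mathcal K}\|Z^\top f(x_t)\|_2 .$$
   Context: $f:\mathbb{R}^n\to\mathbb{R}^m$ is given, $\bar A\in\mathbb{R}^{n\times m}$, $\bar d_0,\dots,\bar d_{T-1}\in\mathbb{R}^n$, and $x_0=0_n$, $x_{t+1}=\bar A f(x_t)+\bar d_t$ for $t=0,\dots,T-1$. $\mathcal K:=\{t\in\{0,\dots,T-1\}:\bar d_t\ne 0\}$, $\mathcal K^c:=\{0,\dots,T-1\}\setminus\mathcal K$, $\hat d_t:=\bar d_t/\|\bar d_t\|_2$ for $t\in\mathcal K$. *)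

(* Defs.v *)
From HB Require Import structures.
From mathcomp Require Import all_boot all_order all_algebra.
From mathcomp Require Import reals.
Set Implicit Arguments. Unset Strict Implicit. Unset Printing Implicit Defensive.
Import Order.TTheory GRing.Theory Num.Theory.
Local Open Scope ring_scope.

Definition norm2 {R : realType} {k : nat} (v : 'cV[R]_k) : R :=
  Num.sqrt (\sum_(i < k) v i 0 ^+ 2).

Fixpoint traj {R : realType} {n m : nat} (f : 'cV[R]_n -> 'cV[R]_m)
  (Abar : 'M[R]_(n, m)) (d : nat -> 'cV[R]_n) (t : nat) : 'cV[R]_n :=
  match t with
  | 0 => 0
  | t'.+1 => Abar *m f (traj f Abar d t') + d t'
  end.

Definition dhat {R : realType} {n : nat} (v : 'cV[R]_n) : 'cV[R]_n :=
  (norm2 v)^-1 *: v.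

Definition dotv {R : realType} {n : nat} (u w : 'cV[R]_n) : R := (u^T *m w) 0 0.

Definition objective {R : realType} {n m : nat} (f : 'cV[R]_n -> 'cV[R]_m)
  (Abar : 'M[R]_(n, m)) (d : nat -> 'cV[R]_n) (T : nat) (A : 'M[R]_(n, m)) : R :=
  \sum_(t < T) norm2 ((Abar - A) *m f (traj f Abar d t) + d t).

Definition unique_global_minimizer {X : Type} {R : realType} (g : X -> R) (B : X) : Prop :=
  (forall A, g B <= g A) /\ (forall A, (forall C, g A <= g C) -> A = B).

(* Main.v *)
Require Import Defs.
From HB Require Import structures.
From mathcomp Require Import all_boot all_order all_algebra.
From mathcomp Require Import reals.
From mathcomp Require Import ring lra.
Import Order.TTheory GRing.Theory Num.Theory.
Local Open Scope ring_scope.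

Section H.
Variable R : realType.
Variable k : nat.
Implicit Types u v w d : 'cV[R]_k.

Lemma dotvE u w : dotv u w = \sum_(i < k) u i 0 * w i 0.
Proof. by rewrite /dotv mxE; apply: eq_bigr => i _; rewrite mxE. Qed.

Lemma dotvC u w : dotv u w = dotv w u.
Proof. by rewrite !dotvE; apply: eq_bigr => i _; rewrite mulrC. Qed.

Lemma dotvDr u v w : dotv u (v + w) = dotv u v + dotv u w.
Proof. by rewrite !dotvE -big_split; apply: eq_bigr => i _; rewrite mxE mulrDr. Qed.

Lemma dotvZr u (c : R) v : dotv u (c *: v) = c * dotv u v.
Proof. by rewrite !dotvE mulr_sumr; apply: eq_bigr => i _; rewrite mxE mulrCA. Qed.

Lemma dotvZl u (c : R) v : dotv (c *: u) v = c * dotv u v.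
Proof. by rewrite dotvC dotvZr dotvC. Qed.

Lemma dotvNr u v : dotv u (- v) = - dotv u v.
Proof. by rewrite -scaleN1r dotvZr mulN1r. Qed.

Lemma dotvDl u v w : dotv (v + w) u = dotv v u + dotv w u.
Proof. by rewrite dotvC dotvDr !(dotvC u). Qed.

Lemma dotvNl u v : dotv (- u) v = - dotv u v.
Proof. by rewrite dotvC dotvNr dotvC. Qed.

Lemma dotv_ge0 v : 0 <= dotv v v.
Proof. by rewrite dotvE; apply: sumr_ge0 => i _; rewrite -expr2 sqr_ge0. Qed.

Lemma norm2E v : norm2 v = Num.sqrt (dotv v v).
Proof. by rewrite /norm2 dotvE; congr Num.sqrt; apply: eq_bigr => i _; rewrite expr2. Qed.

Lemma norm2_sqr v : norm2 v ^+ 2 = dotv v v.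
Proof. by rewrite norm2E sqr_sqrtr // dotv_ge0. Qed.

Lemma norm2_ge0 v : 0 <= norm2 v.
Proof. by rewrite norm2E sqrtr_ge0. Qed.

Lemma norm2Z (c : R) v : norm2 (c *: v) = `|c| * norm2 v.
Proof. by rewrite !norm2E dotvZl dotvZr mulrA -expr2 sqrtrM ?sqr_ge0 // sqrtr_sqr. Qed.

Lemma norm2N v : norm2 (- v) = norm2 v.
Proof. by rewrite -scaleN1r norm2Z normrN1 mul1r. Qed.

Lemma norm2_gt0 d : d != 0 -> 0 < norm2 d.
Proof.
move=> dn0; rewrite norm2E sqrtr_gt0 lt_def dotv_ge0 andbT.
apply/negP => /eqP h; move/negP: dn0; apply; apply/eqP/matrixP => i j.
rewrite ord1 mxE; move: h; rewrite dotvE => h.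
have := @psumr_eq0P _ _ predT (fun i => d i 0 * d i 0).
move=> /(_ (fun j0 _ => (ltac:(rewrite -expr2; exact: sqr_ge0)))) /(_ h) /(_ i isT) /eqP.
by rewrite mulf_eq0 orbb => /eqP.
Qed.

Arguments norm2_gt0 [d].
Lemma cs_sqr u v : dotv u v ^+ 2 <= dotv u u * dotv v v.
Proof.
rewrite !dotvE.
set Suu := \sum_(i < k) u i 0 * u i 0.
set Svv := \sum_(i < k) v i 0 * v i 0.
set Suv := \sum_(i < k) u i 0 * v i 0.
have key : \sum_(i < k) \sum_(j < k) (u i 0 * v j 0 - u j 0 * v i 0) ^+ 2 =
  2 * (Suu * Svv - Suv ^+ 2).
  have -> : \sum_(i < k) \sum_(j < k) (u i 0 * v j 0 - u j 0 * v i 0) ^+ 2 =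
     \sum_(i < k) (\sum_(j < k) (u i 0 * u i 0 * (v j 0 * v j 0))
        + \sum_(j < k) (u j 0 * u j 0 * (v i 0 * v i 0))
        - 2 * \sum_(j < k) (u i 0 * v i 0 * (u j 0 * v j 0))).
    apply: eq_bigr => i _; rewrite mulr_sumr -big_split -sumrB /=.
    by apply: eq_bigr => j _; ring.
  rewrite sumrB big_split -mulr_sumr /=.
  have E1 : \sum_(i < k) \sum_(j < k) (u i 0 * u i 0 * (v j 0 * v j 0)) = Suu * Svv.
    by rewrite big_distrl; apply: eq_bigr => i _; rewrite big_distrr.
  have E2 : \sum_(i < k) \sum_(j < k) (u j 0 * u j 0 * (v i 0 * v i 0)) = Suu * Svv.
    by rewrite exchange_big E1.
  have E3 : \sum_(i < k) \sum_(j < k) (u i 0 * v i 0 * (u j 0 * v j 0)) = Suv ^+ 2.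
    by rewrite expr2 big_distrl; apply: eq_bigr => i _; rewrite big_distrr.
  rewrite E1 E2 E3; ring.
have : 0 <= \sum_(i < k) \sum_(j < k) (u i 0 * v j 0 - u j 0 * v i 0) ^+ 2.
  by apply: sumr_ge0 => i _; apply: sumr_ge0 => j _; exact: sqr_ge0.
rewrite key; lra.
Qed.

Lemma cs_abs u v : `|dotv u v| <= norm2 u * norm2 v.
Proof.
rewrite !norm2E -sqrtrM ?dotv_ge0 // -sqrtr_sqr.
by rewrite ler_sqrt ?cs_sqr // mulr_ge0 // dotv_ge0.
Qed.


Lemma norm2_sqr_eq v e : norm2 v ^+ 2 = e ^+ 2 -> norm2 v = `|e|.
Proof. by move=> h; rewrite -sqrtr_sqr -h sqrtr_sqr ger0_norm // norm2_ge0. Qed.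

Lemma dotv_dhat d w : d != 0 -> dotv d w = norm2 d * dotv (dhat d) w.
Proof.
move=> dn0; have := norm2_gt0 dn0 => hp.
by rewrite /dhat dotvZl mulrA mulfV ?mul1r // gt_eqF.
Qed.

Lemma norm2_dhat d : d != 0 -> norm2 (dhat d) = 1.
Proof.
move=> dn0; have := norm2_gt0 dn0 => hp.
by rewrite /dhat norm2Z ger0_norm ?invr_ge0 ?ltW // mulVf // gt_eqF.
Qed.

Lemma K1 d w : d != 0 -> dotv (dhat d) w + norm2 d <= norm2 (w + d).
Proof.
move=> dn0.
have h := cs_abs (dhat d) (w + d).
rewrite norm2_dhat // mul1r in h.
have e : dotv (dhat d) (w + d) = dotv (dhat d) w + norm2 d.
  have hp := norm2_gt0 dn0.
  rewrite dotvDr; congr (_ + _).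
  rewrite /dhat dotvZl -norm2_sqr expr2 mulrA mulVf ?mul1r // gt_eqF //.
rewrite -e; exact: le_trans (ler_norm _) h.
Qed.

Lemma K2 d w : d != 0 -> norm2 (w + d) = dotv (dhat d) w + norm2 d ->
  `|dotv (dhat d) w| = norm2 w.
Proof.
move=> dn0 h; symmetry; apply: norm2_sqr_eq.
have e := dotv_dhat d w dn0.
have h2 : norm2 (w + d) ^+ 2 = (dotv (dhat d) w + norm2 d) ^+ 2 by rewrite h.
rewrite norm2_sqr dotvDl !dotvDr (dotvC w d) e -!norm2_sqr in h2.
move: h2; set c := dotv (dhat d) w; set nd := norm2 d; set nw := norm2 w => h2.
apply/eqP; rewrite -subr_eq0; apply/eqP.
move: h2; rewrite !expr2 => h2.
lra.
Qed.

Lemma K3 d w (s : R) : d != 0 -> `|dotv (dhat d) w| = norm2 w ->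
  s * dotv (dhat d) w <= norm2 d ->
  norm2 (- (s *: w) + d) = norm2 d - s * dotv (dhat d) w.
Proof.
move=> dn0 hc hs.
have e := dotv_dhat d w dn0.
rewrite -[RHS]ger0_norm ?subr_ge0 //; apply: norm2_sqr_eq.
move: hc hs e; set c := dotv (dhat d) w => hc hs e.
rewrite norm2_sqr !(dotvDl, dotvDr, dotvNr, dotvNl, dotvZr, dotvZl) (dotvC w d) e.
rewrite -!norm2_sqr -hc.
rewrite real_normK ?num_real //; ring.
Qed.

End H.

Lemma norm2_0 (R : realType) k : norm2 (0 : 'cV[R]_k) = 0.
Proof. by rewrite /norm2 big1 ?sqrtr0 // => i _; rewrite mxE expr0n. Qed.

Theorem theorem2 (R : realType) (n m T : nat) (f : 'cV[R]_n -> 'cV[R]_m)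
  (Abar : 'M[R]_(n, m)) (d : nat -> 'cV[R]_n) :
  let x := traj f Abar d in
  (forall Z : 'M[R]_(m, n),
     \sum_(t < T | d t != 0) dotv (dhat (d t)) (Z^T *m f (x t))
     <= \sum_(t < T | d t == 0) norm2 (Z^T *m f (x t))) ->
  (unique_global_minimizer (objective f Abar d T) Abar <->
   (forall Z : 'M[R]_(m, n), Z != 0 ->
      \sum_(t < T | d t != 0) dotv (dhat (d t)) (Z^T *m f (x t))
        = \sum_(t < T | d t == 0) norm2 (Z^T *m f (x t)) ->
      \sum_(t < T | d t != 0) `|dotv (dhat (d t)) (Z^T *m f (x t))|
        < \sum_(t < T | d t != 0) norm2 (Z^T *m f (x t)))).
Proof.
move=> x H.
have split : forall A, objective f Abar d T A =
   \sum_(t < T | d t != 0) norm2 ((Abar - A) *m f (x t) + d t)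
 + \sum_(t < T | d t == 0) norm2 ((Abar - A) *m f (x t)).
  move=> A; rewrite /objective (bigID (fun t : 'I_T => d t == 0)) /= addrC.
  congr (_ + _); apply: eq_bigr => t /eqP ->; by rewrite addr0.
have base : objective f Abar d T Abar = \sum_(t < T | d t != 0) norm2 (d t).
  rewrite split subrr [X in _ + X]big1 ?addr0; last by move=> t _; rewrite mul0mx norm2_0.
  by apply: eq_bigr => t _; rewrite mul0mx add0r.
have trN : forall W : 'M[R]_(n, m), (- W^T)^T = - W.
  by move=> W; apply/matrixP => i j; rewrite !mxE.
have e1 : forall W : 'M[R]_(n, m),
   \sum_(t < T | d t != 0) dotv (dhat (d t)) ((- W) *m f (x t))
   = - \sum_(t < T | d t != 0) dotv (dhat (d t)) (W *m f (x t)).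
  by move=> W; rewrite -sumrN; apply: eq_bigr => t _; rewrite mulNmx dotvNr.
have e2 : forall W : 'M[R]_(n, m),
   \sum_(t < T | d t == 0) norm2 ((- W) *m f (x t))
   = \sum_(t < T | d t == 0) norm2 (W *m f (x t)).
  by move=> W; apply: eq_bigr => t _; rewrite mulNmx norm2N.
have HW : forall W : 'M[R]_(n, m),
   - \sum_(t < T | d t != 0) dotv (dhat (d t)) (W *m f (x t))
   <= \sum_(t < T | d t == 0) norm2 (W *m f (x t)).
  by move=> W; have := H (- W^T); rewrite trN e1 e2.
have low : forall W : 'M[R]_(n, m),
   \sum_(t < T | d t != 0) (dotv (dhat (d t)) (W *m f (x t)) + norm2 (d t))
   <= \sum_(t < T | d t != 0) norm2 (W *m f (x t) + d t).
  by move=> W; apply: ler_sum => t /K1.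
split.
- move=> [U1 U2] Z Zn0 E.
  rewrite ltNge; apply/negP => hle.
  set W := Z^T.
  have tle : forall t : 'I_T, d t != 0 ->
      0 <= norm2 (W *m f (x t)) - `|dotv (dhat (d t)) (W *m f (x t))|.
    move=> t ht; rewrite subr_ge0.
    by have := @cs_abs _ _ (dhat (d t)) (W *m f (x t)); rewrite norm2_dhat // mul1r.
  have s0 : \sum_(t < T | d t != 0)
      (norm2 (W *m f (x t)) - `|dotv (dhat (d t)) (W *m f (x t))|) = 0.
    apply/le_anti; rewrite sumr_ge0 // andbT sumrB subr_le0 //.
  have heq := psumr_eq0P tle s0.
  set S := \sum_(t < T | d t != 0)
      `|dotv (dhat (d t)) (W *m f (x t))| / norm2 (d t).
  have S0 : 0 <= S.
    by apply: sumr_ge0 => t ht; rewrite divr_ge0 ?norm2_ge0.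
  set s := (1 + S)^-1.
  have sp : 0 < s by rewrite invr_gt0; lra.
  have s1 : s * (1 + S) = 1 by rewrite mulVf //; apply/eqP; lra.
  set A := Abar + s *: W.
  have dA : Abar - A = - (s *: W) by rewrite /A opprD addrA subrr add0r.
  have gA : objective f Abar d T A <= objective f Abar d T Abar.
    rewrite base split dA.
    have -> : \sum_(t < T | d t != 0) norm2 (- (s *: W) *m f (x t) + d t)
       = \sum_(t < T | d t != 0) (norm2 (d t) - s * dotv (dhat (d t)) (W *m f (x t))).
      apply: eq_bigr => t ht.
      have hc : `|dotv (dhat (d t)) (W *m f (x t))| = norm2 (W *m f (x t)).
        by apply/eqP; rewrite eq_sym -subr_eq0; apply/eqP; exact: heq.
      rewrite mulNmx -scalemxAl K3 //.
      set c := dotv (dhat (d t)) (W *m f (x t)).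
      set nd := norm2 (d t).
      have ndp : 0 < nd by apply: norm2_gt0.
      have qS : `|c| / nd <= S.
        rewrite /S (bigD1 t) //= lerDl.
        by apply: sumr_ge0 => i /andP [hi _]; rewrite divr_ge0 ?norm2_ge0.
      have q0 : 0 <= `|c| / nd by rewrite divr_ge0 // ltW.
      have cq : `|c| = `|c| / nd * nd by rewrite divfK // gt_eqF.
      have cc : c <= `|c| by exact: ler_norm.
      have hm : 0 <= (nd * s) * (1 + S - `|c| / nd).
        by apply: mulr_ge0; [rewrite mulr_ge0 // ltW | lra].
      have hn : nd * s * (1 + S) = nd by rewrite -mulrA s1 mulr1.
      move: cq hm hn cc; set q := `|c| / nd; set ac := `|c| => cq hm hn cc.
      nra.
    have -> : \sum_(t < T | d t == 0) norm2 (- (s *: W) *m f (x t))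
       = s * \sum_(t < T | d t == 0) norm2 (W *m f (x t)).
      rewrite mulr_sumr; apply: eq_bigr => t _.
      by rewrite mulNmx -scalemxAl norm2N norm2Z ger0_norm // ltW.
    rewrite sumrB -mulr_sumr -/W E; lra.
  have : A = Abar by apply: U2 => C; apply: le_trans gA (U1 C).
  move=> hAA.
  have sW : s *: W = 0 by apply/(addrI Abar); rewrite addr0.
  move/eqP: sW; rewrite scaler_eq0 gt_eqF //= /W trmx_eq0 => /eqP Z0.
  by move: Zn0; rewrite Z0 eqxx.
- move=> C; split.
  + move=> A; rewrite base split.
    have := low (Abar - A); have := HW (Abar - A); rewrite big_split /=; lra.
  + move=> A hA; case: (eqVneq A Abar) => // hne; exfalso.
    set W := Abar - A.
    have Wn0 : W != 0 by rewrite subr_eq0 eq_sym.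
    have le1 := hA Abar; rewrite base split in le1.
    have l1 := low W; have l2 := HW W.
    rewrite big_split /= in l1.
    have eqs : \sum_(t < T | d t != 0) (norm2 (W *m f (x t) + d t)
          - (dotv (dhat (d t)) (W *m f (x t)) + norm2 (d t))) = 0.
      rewrite sumrB big_split /=; rewrite -/W in le1; lra.
    have tge : forall t : 'I_T, d t != 0 -> 0 <= norm2 (W *m f (x t) + d t)
          - (dotv (dhat (d t)) (W *m f (x t)) + norm2 (d t)).
      by move=> t ht; rewrite subr_ge0 K1.
    have teq := psumr_eq0P tge eqs.
    have Zn0 : - W^T != 0 by rewrite oppr_eq0 trmx_eq0.
    have := C _ Zn0; rewrite trN e1 e2.
    move=> /(_ ltac:(rewrite -/W in le1; lra)).
    have -> : \sum_(t < T | d t != 0) `|dotv (dhat (d t)) (- W *m f (x t))|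
       = \sum_(t < T | d t != 0) norm2 (- W *m f (x t)).
      apply: eq_bigr => t ht; rewrite mulNmx dotvNr normrN norm2N.
      apply: K2 => //; apply/eqP; rewrite -subr_eq0; apply/eqP; exact: teq.
    by rewrite ltxx.
Qed.
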